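(* Let $G=(V,E)$ be a finite simple graph with at least one edge and no isolated vertices, let $\overline{\deg}=\frac1{|V|}\sum_{v\in V}\deg v$ be its average degree, let $\lambda_N$ be the largest eigenvalue of its normalized Laplacian (so $\lambda_N>1$), and let $d\ge0$ be an integer. Then \[ \chi^d(G)\;\ge\;\frac{\lambda_N}{\lambda_N-1+d/\overline{\deg}}. \] Moreover, the bound is sharp: there exist graphs (and values of $d$) for which equality holds.
   Context: For a graph $G$ with adjacency matrix $A$ ($A_{v,w}=1$ if $v\sim w$, else $0$) and degree matrix $D=\mathrm{diag}(\deg v)$, the normalized Laplacian is $L=\mathrm{Id}-D^{-1}A$, with real eigenvalues $0=\lambda_1\le\dots\le\lambda_N$. For an integer $d\ge0$, a vertex coloring $V\to\{1,\dots,k\}$ is $d$-improper if every vertex has at most $d$ neighbors with the same color as itself; $\chi^d(G)$ is the least $k$ admitting a $d$-improper $k$-coloring. *)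

(* Defs.v *)
From HB Require Import structures.
From mathcomp Require Import all_boot all_order all_algebra.
From mathcomp Require Export reals.
Set Implicit Arguments. Unset Strict Implicit. Unset Printing Implicit Defensive.
Import Order.TTheory GRing.Theory Num.Theory.
Local Open Scope ring_scope.

Definition simple_graph n (e : rel 'I_n) : Prop :=
  (forall v w, e v w = e w v) /\ (forall v, ~~ e v v).

Definition has_edge n (e : rel 'I_n) : Prop := exists v w, e v w.

Definition deg n (e : rel 'I_n) (v : 'I_n) : nat := #|[set w | e v w]|.

Definition no_isolated n (e : rel 'I_n) : Prop := forall v, (0 < deg e v)%N.

Definition avg_deg (R : realType) n (e : rel 'I_n) : R :=
  (\sum_(v < n) deg e v)%:R / n%:R.

Definition adjmx (R : realType) n (e : rel 'I_n) : 'M[R]_n :=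
  \matrix_(i, j) (e i j)%:R.

Definition degmx (R : realType) n (e : rel 'I_n) : 'M[R]_n :=
  \matrix_(i, j) ((i == j)%:R * (deg e i)%:R).

Definition norm_laplacian (R : realType) n (e : rel 'I_n) : 'M[R]_n :=
  1%:M - invmx (degmx R e) *m adjmx R e.

Definition largest_eigenvalue (R : realType) n (e : rel 'I_n) (lam : R) : Prop :=
  eigenvalue (norm_laplacian R e) lam /\
  (forall mu, eigenvalue (norm_laplacian R e) mu -> mu <= lam).

Definition d_improper n (e : rel 'I_n) (d k : nat) (c : {ffun 'I_n -> 'I_k}) : bool :=
  [forall v, #|[set w | e v w && (c w == c v)]| <= d]%N.

(* chi^d(G): least k admitting a d-improper k-coloring (n itself always works) *)
Definition improper_chromatic n (e : rel 'I_n) (d : nat) : nat :=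
  \big[minn/n]_(k < n.+1 | [exists c : {ffun 'I_n -> 'I_k}, d_improper e d c]) (k : nat).

(* Main.v *)
Require Import Defs.
From HB Require Import structures.
From mathcomp Require Import all_boot all_order all_algebra.
From mathcomp Require Import reals.
From mathcomp Require Import ring lra.
Set Implicit Arguments. Unset Strict Implicit. Unset Printing Implicit Defensive.
Import Order.TTheory GRing.Theory Num.Theory.
Local Open Scope ring_scope.

Definition Nf (R : realType) n (e : rel 'I_n) (f : 'rV[R]_n) : R :=
  \sum_i (deg e i)%:R * f 0 i ^+ 2.
Definition Sf (R : realType) n (e : rel 'I_n) (f : 'rV[R]_n) : R :=
  \sum_i \sum_j (e i j)%:R * f 0 i * f 0 j.
Definition Qf (R : realType) n (e : rel 'I_n) (f : 'rV[R]_n) : R :=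
  Nf e f - Sf e f.
Definition Bf (R : realType) n (P : 'M[R]_n) (x y : 'rV[R]_n) : R :=
  (x *m P *m y^T) 0 0.

Lemma BfE (R : realType) n (P : 'M[R]_n) x y :
  Bf P x y = \sum_i \sum_j x 0 i * P i j * y 0 j.
Proof.
rewrite /Bf mxE exchange_big /=; apply: eq_bigr => j _.
by rewrite !mxE mulr_suml.
Qed.

Lemma sum_delta (R : realType) n (i : 'I_n) (F : 'I_n -> R) :
  \sum_j ((i == j)%:R * F j) = F i.
Proof.
rewrite (bigD1 i) //= eqxx mul1r big1 ?addr0 // => j /negbTE.
by rewrite eq_sym => ->; rewrite mul0r.
Qed.

Lemma sum_e (R : realType) n (e : rel 'I_n) i :
  \sum_j ((e i j)%:R : R) = (deg e i)%:R.
Proof.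
rewrite /deg -sum1_card natr_sum [RHS]big_mkcond /=; apply: eq_bigr => j _.
by rewrite inE; case: (e i j).
Qed.

Lemma sum_sym (R : realType) n (e : rel 'I_n) (g : 'I_n -> R) :
  (forall v w, e v w = e w v) ->
  \sum_i \sum_j (e i j)%:R * g j = \sum_j (deg e j)%:R * g j.
Proof.
move=> sym; rewrite exchange_big /=; apply: eq_bigr => j _.
rewrite -mulr_suml -(sum_e R e j); congr (_ * _); apply: eq_bigr => i _.
by rewrite sym.
Qed.

Lemma Nf_ge0 (R : realType) n (e : rel 'I_n) (f : 'rV[R]_n) : 0 <= Nf e f.
Proof. by apply: sumr_ge0 => i _; rewrite mulr_ge0 // sqr_ge0. Qed.

Lemma Nf_gt0 (R : realType) n (e : rel 'I_n) (f : 'rV[R]_n) :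
  no_isolated e -> f != 0 -> 0 < Nf e f.
Proof.
move=> noi fn0; rewrite lt_def Nf_ge0 andbT; apply/negP => /eqP N0.
move: fn0 => /negP; apply; apply/eqP/rowP => i; rewrite mxE.
have := (@psumr_eq0P _ _ _ _ (fun i _ => mulr_ge0 (ler0n _ _) (sqr_ge0 (f 0 i))) N0 i isT).
move/eqP; rewrite mulf_eq0 pnatr_eq0 => /orP[]; first by move/eqP=> h; move: (noi i); rewrite h.
by rewrite sqrf_eq0 => /eqP.
Qed.

Lemma Qf_le2 (R : realType) n (e : rel 'I_n) (f : 'rV[R]_n) :
  (forall v w, e v w = e w v) -> Qf e f <= 2 * Nf e f.
Proof.
move=> sym.
have H : 0 <= \sum_i \sum_j (e i j)%:R * (f 0 i + f 0 j) ^+ 2.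
  by apply: sumr_ge0 => i _; apply: sumr_ge0 => j _; rewrite mulr_ge0 // sqr_ge0.
have E : \sum_i \sum_j (e i j)%:R * (f 0 i + f 0 j) ^+ 2 =
   Nf e f + Nf e f + 2 * Sf e f.
  rewrite /Nf {2}(_ : \sum_i (deg e i)%:R * f 0 i ^+ 2 =
        \sum_i \sum_j (e i j)%:R * f 0 j ^+ 2); last by rewrite sum_sym.
  rewrite /Sf mulr_sumr -!big_split /=; apply: eq_bigr => i _.
  rewrite -sum_e mulr_suml mulr_sumr -!big_split /=; apply: eq_bigr => j _.
  ring.
rewrite /Qf; lra.
Qed.

Lemma quad_disc (R : realType) (a b c : R) : 0 <= a ->
  (forall t, 0 <= c + 2 * t * b + t ^+ 2 * a) -> b ^+ 2 <= a * c.
Proof.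
move=> a0 H; have [ap|] := boolP (0 < a).
  have := H (- b / a).
  have -> : c + 2 * (- b / a) * b + (- b / a) ^+ 2 * a = (a * c - b ^+ 2) / a.
    by field; rewrite gt_eqF.
  by rewrite pmulr_lge0 ?invr_gt0 // subr_ge0.
rewrite lt_def a0 andbT negbK => /eqP a_eq0; subst a.
rewrite mul0r; have [b0|bn0] := eqVneq b 0; first by rewrite b0 expr0n.
have := H (- (c + 1) / (2 * b)).
have -> : c + 2 * (- (c + 1) / (2 * b)) * b + (- (c + 1) / (2 * b)) ^+ 2 * 0 = -1.
  by field.
by rewrite ler0N1.
Qed.

Lemma Bf_quad (R : realType) n (P : 'M[R]_n) (x y : 'rV[R]_n) (t : R) :
  P^T = P ->
  Bf P (x + t *: y) (x + t *: y) = Bf P x x + 2 * t * Bf P x y + t ^+ 2 * Bf P y y.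
Proof.
move=> sP.
have sw : Bf P y x = Bf P x y.
  rewrite !BfE exchange_big /=; apply: eq_bigr => i _; apply: eq_bigr => j _.
  have -> : P j i = P i j by rewrite -{1}sP mxE.
  ring.
rewrite (_ : 2 * t * Bf P x y = t * Bf P x y + t * Bf P y x); last by rewrite sw; ring.
rewrite !BfE !mulr_sumr -!big_split /=; apply: eq_bigr => i _.
rewrite !mulr_sumr -!big_split /=; apply: eq_bigr => j _.
rewrite !mxE; ring.
Qed.

Lemma CS (R : realType) n (P : 'M[R]_n) :
  P^T = P -> (forall z, 0 <= Bf P z z) ->
  forall x y, Bf P x y ^+ 2 <= Bf P y y * Bf P x x.
Proof.
move=> sP psd x y; apply: quad_disc => // t.
by rewrite -Bf_quad.
Qed.

Lemma sq_le_sum (R : realType) n (f : 'rV[R]_n) i :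
  f 0 i ^+ 2 <= \sum_j f 0 j ^+ 2.
Proof.
rewrite (bigD1 i) //= lerDl; apply: sumr_ge0 => j _; exact: sqr_ge0.
Qed.

Lemma coercive (R : realType) n (P : 'M[R]_n) :
  P^T = P -> (forall z, 0 <= Bf P z z) -> P \in unitmx ->
  exists2 c : R, 0 < c & forall f : 'rV[R]_n, c * (\sum_i f 0 i ^+ 2) <= Bf P f f.
Proof.
move=> sP psd Pu.
pose M := invmx P.
have sM : M^T = M by rewrite /M trmx_inv sP.
pose K := \sum_i \sum_j `|M i j|.
have K0 : 0 <= K by apply: sumr_ge0 => i _; apply: sumr_ge0 => j _.
exists (K + 1)^-1; first by rewrite invr_gt0; lra.
move=> f; set S := \sum_i f 0 i ^+ 2.
have S0 : 0 <= S by apply: sumr_ge0 => i _; exact: sqr_ge0.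
have h1 : Bf P (f *m M) f = S.
  rewrite /Bf mulmxKV // mxE; apply: eq_bigr => i _; by rewrite !mxE expr2.
have h2 : Bf P (f *m M) (f *m M) = Bf M f f.
  by rewrite /Bf mulmxKV // trmx_mul sM mulmxA.
have h3 : Bf M f f <= K * S.
  rewrite BfE /K mulr_suml; apply: ler_sum => i _.
  rewrite mulr_suml; apply: ler_sum => j _.
  apply: le_trans (ler_norm _) _.
  rewrite (mulrC (f 0 i)) -mulrA normrM ler_wpM2l //.
  have hi := sq_le_sum f i; have hj := sq_le_sum f j.
  rewrite -/S in hi hj.
  rewrite normrM.
  have ui : 0 <= `|f 0 i| by []. have uj : 0 <= `|f 0 j| by [].
  rewrite -(real_normK (num_real (f 0 i))) in hi.
  rewrite -(real_normK (num_real (f 0 j))) in hj.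
  nra.
have B0 := psd f.
have := CS sP psd (f *m M) f; rewrite h1 h2 => hcs.
have hS : S ^+ 2 <= Bf P f f * (K * S).
  apply: le_trans hcs _; exact: ler_wpM2l.
rewrite mulrC ler_pdivrMr; last by lra.
have [S_eq0|Sp] := eqVneq S 0; first by rewrite S_eq0; nra.
have Sp' : 0 < S by rewrite lt_def Sp S0.
have : S <= Bf P f f * K.
  rewrite -(ler_pM2r Sp') -mulrA -expr2; exact: hS.
nra.
Qed.

Lemma degmx_diag (R : realType) n (e : rel 'I_n) :
  degmx R e = diag_mx (\row_i (deg e i)%:R).
Proof.
apply/matrixP => i j; rewrite !mxE; case: eqP => [->|_]; first by rewrite mul1r mulr1n.
by rewrite mul0r mulr0n.
Qed.

Lemma degmx_unit (R : realType) n (e : rel 'I_n) :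
  no_isolated e -> degmx R e \in unitmx.
Proof.
move=> noi; rewrite degmx_diag unitmxE det_diag unitfE.
apply/prodf_neq0 => i _; rewrite mxE pnatr_eq0 -lt0n; exact: noi.
Qed.

Definition Pm (R : realType) n (e : rel 'I_n) (s : R) : 'M[R]_n :=
  adjmx R e + (s - 1) *: degmx R e.

Lemma Pm_sym (R : realType) n (e : rel 'I_n) (s : R) :
  simple_graph e -> (Pm e s)^T = Pm e s.
Proof.
move=> [sym _]; apply/matrixP => i j; rewrite !mxE sym; congr (_ + _ * _).
by rewrite (eq_sym j i); case: (eqVneq i j) => [->|]; rewrite ?mul0r.
Qed.

Lemma Bf_Pm (R : realType) n (e : rel 'I_n) (s : R) (f : 'rV[R]_n) :
  Bf (Pm e s) f f = s * Nf e f - Qf e f.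
Proof.
rewrite BfE /Qf /Nf /Sf.
rewrite (_ : forall N S : R, s * N - (N - S) = (s - 1) * N + S); last by move=> N S; ring.
rewrite mulr_sumr -big_split /=; apply: eq_bigr => i _.
rewrite (_ : (s - 1) * ((deg e i)%:R * f 0 i ^+ 2) = \sum_j ((i == j)%:R * ((s - 1) * (deg e i)%:R * f 0 i * f 0 j))); last by rewrite sum_delta; ring.
rewrite -big_split /=; apply: eq_bigr => j _.
rewrite !mxE; case: eqP => [->|_]; ring.
Qed.

Lemma Nf0 (R : realType) n (e : rel 'I_n) : Nf e (0 : 'rV[R]_n) = 0.
Proof. by rewrite /Nf big1 // => i _; rewrite mxE expr0n /= mulr0. Qed.

Lemma Qf0 (R : realType) n (e : rel 'I_n) : Qf e (0 : 'rV[R]_n) = 0.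
Proof.
rewrite /Qf Nf0 /Sf big1 ?subr0 // => i _; rewrite big1 // => j _.
by rewrite !mxE !mulr0.
Qed.

Lemma deg_le (n : nat) (e : rel 'I_n) i : (deg e i <= n)%N.
Proof. by apply: leq_trans (max_card _) _; rewrite card_ord. Qed.

Lemma spectral (R : realType) n (e : rel 'I_n) :
  simple_graph e -> no_isolated e -> (0 < n)%N ->
  exists s : R, eigenvalue (norm_laplacian R e) s /\
                forall f : 'rV[R]_n, Qf e f <= s * Nf e f.
Proof.
move=> sg noi n0; have [sym irr] := sg.
pose E : classical_sets.set R :=
  fun r => exists2 f : 'rV[R]_n, f != 0 & r = Qf e f / Nf e f.
have hasE : classical_sets.has_sup E.
  split.
    exists (Qf e (const_mx 1 : 'rV[R]_n) / Nf e (const_mx 1)); exists (const_mx 1) => //.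
    apply/eqP => /rowP /(_ (Ordinal n0)); rewrite !mxE => /eqP; by rewrite oner_eq0.
  exists 2 => r [f fn0 ->]; rewrite ler_pdivrMr ?Nf_gt0 //; exact: Qf_le2.
pose s := sup E.
have ub : forall f : 'rV[R]_n, Qf e f <= s * Nf e f.
  move=> f; have [->|fn0] := eqVneq f 0; first by rewrite Qf0 Nf0 mulr0.
  rewrite -ler_pdivrMr ?Nf_gt0 //; apply: (sup_upper_bound hasE); by exists f.
exists s; split => //.
have sP := Pm_sym s sg.
have psd : forall z, 0 <= Bf (Pm e s) z z by move=> z; rewrite Bf_Pm subr_ge0.
have nu : ~~ (Pm e s \in unitmx).
  apply/negP => Pu; have [c c0 hc] := coercive sP psd Pu.
  have eps0 : 0 < c / n%:R by rewrite divr_gt0 // ltr0n.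
  have [r [f fn0 ->] hr] := sup_adherent eps0 hasE.
  have Np := Nf_gt0 noi fn0.
  suff : Qf e f / Nf e f <= s - c / n%:R by rewrite leNgt hr.
  rewrite ler_pdivrMr //.
  have h1 := hc f; rewrite Bf_Pm in h1.
  have h2 : Nf e f <= n%:R * \sum_i f 0 i ^+ 2.
    rewrite /Nf mulr_sumr; apply: ler_sum => i _; apply: ler_wpM2r; first exact: sqr_ge0.
    by rewrite ler_nat deg_le.
  have h3 : c / n%:R * Nf e f <= c * \sum_i f 0 i ^+ 2.
    rewrite -mulrA ler_pM2l // mulrC ler_pdivrMr ?ltr0n //.
    by rewrite [_ * n%:R]mulrC.
  rewrite mulrBl; lra.
move: nu; rewrite unitmxE unitfE negbK => /det0P [x xn0 xP].
have Du := degmx_unit R noi.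
apply/eigenvalueP; exists (x *m degmx R e); last first.
  apply: contra xn0 => /eqP h; by rewrite -(mulmxK Du x) h mul0mx.
have xA : x *m adjmx R e = - ((s - 1) *: (x *m degmx R e)).
  apply/eqP; rewrite -addr_eq0 scalemxAr -mulmxDr; exact/eqP.
rewrite /norm_laplacian mulmxBr mulmx1 mulmxA mulmxK // xA opprK scalerBl scale1r.
by rewrite addrC subrK.
Qed.

Definition gcol (R : realType) n k (c : {ffun 'I_n -> 'I_k}) (a : 'I_k) : 'rV[R]_n :=
  \row_i ((c i == a)%:R - (k%:R)^-1).

Lemma G_eq (R : realType) n k (c : {ffun 'I_n -> 'I_k}) i j : (0 < k)%N ->
  \sum_a (gcol R c a 0 i * gcol R c a 0 j) = (c i == c j)%:R - (k%:R)^-1.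
Proof.
move=> k0; have kn0 : (k%:R : R) != 0 by rewrite pnatr_eq0 -lt0n.
rewrite (eq_bigr (fun a => (c i == a)%:R * ((c j == a)%:R - (k%:R)^-1) +
   (c j == a)%:R * (- (k%:R)^-1) + (k%:R : R)^-1 ^+ 2)); last first.
  by move=> a _; rewrite !mxE; ring.
rewrite !big_split /= !sum_delta sumr_const card_ord eq_sym -mulr_natr.
by field.
Qed.

Lemma sumN (R : realType) n (e : rel 'I_n) k (c : {ffun 'I_n -> 'I_k}) : (0 < k)%N ->
  \sum_a Nf e (gcol R c a) = (\sum_i (deg e i)%:R) * (1 - (k%:R)^-1).
Proof.
move=> k0; rewrite /Nf exchange_big /= mulr_suml; apply: eq_bigr => i _.
rewrite -mulr_sumr; congr (_ * _).
rewrite (eq_bigr (fun a => gcol R c a 0 i * gcol R c a 0 i)); last by move=> a _; rewrite expr2.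
by rewrite G_eq // eqxx.
Qed.

Lemma sumS (R : realType) n (e : rel 'I_n) k (c : {ffun 'I_n -> 'I_k}) : (0 < k)%N ->
  \sum_a Sf e (gcol R c a) =
  \sum_i \sum_j (e i j)%:R * (c i == c j)%:R - (\sum_i (deg e i)%:R) / k%:R.
Proof.
move=> k0; rewrite /Sf exchange_big /= mulr_suml -sumrB; apply: eq_bigr => i _.
rewrite exchange_big /= -sum_e mulr_suml -sumrB; apply: eq_bigr => j _.
rewrite (eq_bigr (fun a => (e i j)%:R * (gcol R c a 0 i * gcol R c a 0 j))); last first.
  by move=> a _; ring.
by rewrite -mulr_sumr G_eq //; ring.
Qed.

Lemma M_le (R : realType) n (e : rel 'I_n) d k (c : {ffun 'I_n -> 'I_k}) :
  d_improper e d c ->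
  \sum_i \sum_j ((e i j)%:R * (c i == c j)%:R : R) <= n%:R * d%:R.
Proof.
move=> /forallP di.
have -> : (n%:R * d%:R : R) = \sum_(i < n) (d%:R : R) by rewrite sumr_const card_ord mulr_natl.
apply: ler_sum => i _.
rewrite (_ : \sum_j _ = (#|[set w | e i w && (c w == c i)]|)%:R); last first.
  rewrite -sum1_card natr_sum [RHS]big_mkcond /=; apply: eq_bigr => j _.
  by rewrite inE eq_sym; case: (e i j); case: (c j == c i); rewrite /= ?mulr1 ?mul1r ?mulr0 ?mul0r.
have h := di i; by rewrite -(ler_nat R) in h.
Qed.

Lemma lam_ge1 (R : realType) n (e : rel 'I_n) (lam : R) (v : 'I_n) :
  simple_graph e -> no_isolated e ->
  (forall f : 'rV[R]_n, Qf e f <= lam * Nf e f) -> 1 <= lam.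
Proof.
move=> [sym irr] noi H.
pose dl : 'rV[R]_n := \row_i ((v == i)%:R).
have hN : Nf e dl = (deg e v)%:R.
  rewrite /Nf (eq_bigr (fun i => (v == i)%:R * (deg e i)%:R)); first exact: sum_delta.
  by move=> i _; rewrite mxE; case: (v == i); rewrite /= ?mulr1n; ring.
have hS : Sf e dl = 0.
  rewrite /Sf big1 // => i _; rewrite big1 // => j _; rewrite !mxE.
  case: (eqVneq v i) => [<-|_]; last by rewrite /=; ring.
  case: (eqVneq v j) => [<-|_]; last by rewrite /=; ring.
  by rewrite (negbTE (irr v)) /=; ring.
have := H dl; rewrite /Qf hS subr0 hN.
have dp : (0 : R) < (deg e v)%:R by rewrite ltr0n.
rewrite -{1}(mul1r (deg e v)%:R) ler_pM2r //.
Qed.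

Lemma chi_spec n (e : rel 'I_n) d :
  (forall v, ~~ e v v) ->
  (improper_chromatic e d <= n)%N /\
  exists c : {ffun 'I_n -> 'I_(improper_chromatic e d)}, d_improper e d c.
Proof.
move=> irr; rewrite /improper_chromatic.
apply: (big_ind (fun k => (k <= n)%N /\ exists c : {ffun 'I_n -> 'I_k}, d_improper e d c)).
- split => //; exists [ffun v => v]; apply/forallP => v.
  rewrite (_ : [set w | _] = set0) ?cards0 //; apply/setP => w; rewrite !inE !ffunE.
  by case: (eqVneq w v) => [->|]; rewrite ?(negbTE (irr v)) ?andbF.
- move=> x y Hx Hy; rewrite /minn; by case: ifP.
- move=> i /existsP [c hc]; split; first by rewrite -ltnS ltn_ord.
  by exists c.
Qed.

Lemma bound_k (R : realType) n (e : rel 'I_n) d (lam : R) k (c : {ffun 'I_n -> 'I_k}) :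
  simple_graph e -> no_isolated e -> (0 < n)%N ->
  (forall f : 'rV[R]_n, Qf e f <= lam * Nf e f) -> 1 <= lam ->
  d_improper e d c ->
  lam / (lam - 1 + d%:R / avg_deg R e) <= k%:R.
Proof.
move=> sg noi n0 H l1 hc.
have k0 : (0 < k)%N by case: k c {hc} => [c|//]; case: (c (Ordinal n0)).
set T := \sum_i ((deg e i)%:R : R).
have hsum : \sum_a Qf e (gcol R c a) <= lam * \sum_a Nf e (gcol R c a).
  by rewrite mulr_sumr; apply: ler_sum => a _; exact: H.
rewrite /Qf sumrB sumS // sumN // in hsum.
have hM := M_le R hc.
have Tp : 0 < T.
  apply: lt_le_trans (_ : (0 : R) < (deg e (Ordinal n0))%:R) _; first by rewrite ltr0n.
  rewrite /T (bigD1 (Ordinal n0)) //= lerDl; exact: sumr_ge0.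
have -> : avg_deg R e = T / n%:R by rewrite /avg_deg natr_sum.
set M := \sum_i \sum_j _ in hsum hM.
set K := (k%:R : R) in hsum *.
set N := (n%:R : R) in hM *.
set D := (d%:R : R) in hM *.
have Kp : 0 < K by rewrite ltr0n.
have Np : 0 < N by rewrite ltr0n.
have D0 : 0 <= D by rewrite ler0n.
set x := D / (T / N).
have x0 : 0 <= x by rewrite divr_ge0 // divr_ge0 // ltW.
have hx : x * T = D * N.
  by rewrite /x; field; rewrite -/N !gt_eqF.
set y := K^-1 in hsum.
have hy : K * y = 1 by rewrite /y divff // gt_eqF.
rewrite -/y in hsum.
have s1 : T * (1 - x - lam * (1 - y)) <= 0.
  have -> : T * (1 - x - lam * (1 - y)) = T - x * T - lam * (T * (1 - y)) by ring.
  rewrite hx; rewrite (_ : T / K = T * y) in hsum; last by rewrite /y.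
  rewrite -/T in hsum; lra.
have s1' : 1 - x - lam * (1 - y) <= 0.
  by rewrite -(pmulr_rle0 _ Tp).
have s2 : lam <= K * (lam - 1 + x).
  have : K * (1 - x - lam * (1 - y)) <= 0 by rewrite pmulr_rle0.
  have -> : K * (1 - x - lam * (1 - y)) = K - K * x - lam * K + lam * (K * y) by ring.
  rewrite hy; lra.
have dp : 0 < lam - 1 + x.
  rewrite ltNge; apply/negP => h.
  have : K * (lam - 1 + x) <= 0 by rewrite pmulr_rle0.
  lra.
rewrite ler_pdivrMr // mulrC; exact: s2.
Qed.


Definition K2 : rel 'I_2 := fun i j => i != j.

Lemma K2_deg v : deg K2 v = 1%N.
Proof.
rewrite /deg (_ : [set w | K2 v w] = [set~ v]) ?cardsC1 ?card_ord //.
by apply/setP => w; rewrite !inE /K2 eq_sym.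
Qed.

Lemma K2_simple : simple_graph K2.
Proof. by split => [v w|v]; rewrite /K2 ?eqxx // eq_sym. Qed.

Lemma K2_L (R : realType) : norm_laplacian R K2 = 1%:M - adjmx R K2.
Proof.
rewrite /norm_laplacian (_ : degmx R K2 = 1%:M) ?invmx1 ?mul1mx //.
by apply/matrixP => i j; rewrite !mxE K2_deg mulr1; case: (i == j).
Qed.

Lemma K2_eig (R : realType) : largest_eigenvalue K2 (2 : R).
Proof.
rewrite /largest_eigenvalue K2_L; split.
  apply/eigenvalueP; exists (\row_i (if i == ord0 then 1 else -1 : R)).
    apply/rowP => j; rewrite !mxE !big_ord_recl big_ord0 !mxE.
    by case: j => [[|[|//]]] jlt /=; rewrite /K2 /=; ring.
  apply/eqP => /rowP /(_ ord0); rewrite !mxE /= => /eqP; by rewrite oner_eq0.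
move=> mu /eigenvalueP [v hv vn0].
have e0 := congr1 (fun m : 'rV[R]_2 => m 0 ord0) hv.
have e1 := congr1 (fun m : 'rV[R]_2 => m 0 ord_max) hv.
move: e0 e1; rewrite /= !mxE !big_ord_recl !big_ord0 !mxE /= /K2 /=.
set a := v 0 ord0; set b := v 0 (lift ord0 ord0).
have -> : v 0 ord_max = b by congr (v 0 _); apply/val_inj.
move=> e0 e1.
rewrite leNgt; apply/negP => mu2.
have hab : a = b.
  have h : (a - b) * (2 - mu) = 0.
    have -> : (a - b) * (2 - mu) = 2 * (a - b) - (mu * a - mu * b) by ring.
    lra.
  move/eqP: h; rewrite mulf_eq0 => /orP[/eqP|/eqP] h; lra.
have ha : a = 0.
  have h : mu * (a + b) = 0.
    have -> : mu * (a + b) = mu * a + mu * b by ring.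
    lra.
  move/eqP: h; rewrite mulf_eq0 => /orP[/eqP|/eqP] h; lra.
move/negP: vn0; apply; apply/eqP/rowP => j; rewrite mxE.
case: j => [[|[|//]]] jlt.
  by rewrite (_ : Ordinal jlt = ord0) //; apply/val_inj.
by rewrite (_ : Ordinal jlt = lift ord0 ord0) -/b -?hab //; apply/val_inj.
Qed.

Lemma K2_col k (c : {ffun 'I_2 -> 'I_k}) : d_improper K2 0 c -> (2 <= k)%N.
Proof.
case: k c => [c|[c|//]] hc; first by case: (c ord0).
move/forallP: hc => /(_ ord0); rewrite leqn0 cards_eq0 => /eqP h.
have : ord_max \in [set w | K2 ord0 w && (c w == c ord0)].
  rewrite inE /K2 /=; apply/eqP/val_inj.
  by case: (c ord_max) => [[|m] lt1] //; case: (c ord0) => [[|m'] lt2].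
by rewrite h inE.
Qed.

Lemma K2_chi : improper_chromatic K2 0 = 2%N.
Proof.
have [hle [c hc]] := chi_spec 0 K2_simple.2.
by apply/eqP; rewrite eqn_leq hle (K2_col hc).
Qed.

Theorem mainTheorem13 (R : realType) :
  (forall (n : nat) (e : rel 'I_n) (d : nat) (lam : R),
     simple_graph e -> has_edge e -> no_isolated e ->
     largest_eigenvalue e lam ->
     lam / (lam - 1 + d%:R / avg_deg R e) <= (improper_chromatic e d)%:R)
  /\
  (exists (n : nat) (e : rel 'I_n) (d : nat) (lam : R),
     [/\ simple_graph e, has_edge e, no_isolated e,
         largest_eigenvalue e lam &
         (improper_chromatic e d)%:R = lam / (lam - 1 + d%:R / avg_deg R e)]).
Proof.
split.
  move=> n e d lam sg [v [w hvw]] noi [eig lmax].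
  have n0 : (0 < n)%N by apply: (leq_ltn_trans (leq0n v) (ltn_ord v)).
  have [s [es hs]] := spectral R sg noi n0.
  have H : forall f : 'rV[R]_n, Qf e f <= lam * Nf e f.
    move=> f; apply: le_trans (hs f) _; apply: ler_wpM2r; [exact: Nf_ge0 | exact: lmax].
  have l1 := lam_ge1 v sg noi H.
  have [_ [c hc]] := chi_spec d sg.2.
  exact: bound_k sg noi n0 H l1 hc.
exists 2%N, K2, 0%N, 2; split.
- exact: K2_simple.
- by exists ord0, ord_max.
- by move=> v; rewrite K2_deg.
- exact: K2_eig.
rewrite K2_chi mul0r addr0.
have -> : (2 : R) - 1 = 1 by lra.
by rewrite divr1.
Qed.
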